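(* Let $\kappa=(a,b,0,0)\in[-2,2]^4$. Then each level set $X_\kappa(x)\subset E_\kappa$ is an ellipse (possibly degenerate) centered at $(x,0,0)$. Consequently $Y_\kappa(0)$ and $Z_\kappa(0)$ intersect every ellipse $X_\kappa(x)$.
   Context: Let $M$ be a four-holed sphere with $\pi_1(M)=\langle A,B,C,D:ABCD=I\rangle$, $A,B,C,D$ the boundary classes, and set $X=AB$, $Y=BC$, $Z=CA$. For $\kappa=(a,b,c,d)\in[-2,2]^4$, $E_\kappa\subset\mathbb R^3$ is the set of triples $(\operatorname{tr}\rho(X),\operatorname{tr}\rho(Y),\operatorname{tr}\rho(Z))$ for $[\rho]\in\operatorname{Hom}(\pi_1(M),\mathrm{SU}(2))/\mathrm{SU}(2)$ with boundary traces $(\operatorname{tr}\rho(A),\operatorname{tr}\rho(B),\operatorname{tr}\rho(C),\operatorname{tr}\rho(D))=\kappa$; it lies in the surface $x^2+y^2+z^2+xyz=(ab+cd)x+(ad+bc)y+(ac+bd)z-(a^2+b^2+c^2+d^2+abcd-4)$. The level sets are $X_\kappa(x)=\{(x',y',z')\in E_\kappa:x'=x\}$, $Y_\kappa(y)=\{(x',y',z')\in E_\kappa:y'=y\}$, $Z_\kappa(z)=\{(x',y',z')\in E_\kappa:z'=z\}$. *)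

(* Defs.v *)
From HB Require Import structures.
From mathcomp Require Import all_boot all_order all_algebra.
From mathcomp Require Import complex.
From mathcomp Require Import reals.
Set Implicit Arguments. Unset Strict Implicit. Unset Printing Implicit Defensive.
Import Order.TTheory GRing.Theory Num.Theory.
Local Open Scope ring_scope.
Local Open Scope complex_scope.

Section Defs.
Variable R : realType.

Definition adjmx (M : 'M[R[i]]_2) : 'M[R[i]]_2 := map_mx (@conjc R) M^T.

Definition SU2 (M : 'M[R[i]]_2) : Prop := M *m adjmx M = 1%:M /\ \det M = 1.

(* A representation rho : pi_1(M) -> SU(2) of the four-holed sphere group
   <A,B,C,D | ABCD = I> is exactly a quadruple of SU(2) matrices
   (rho A, rho B, rho C, rho D) whose product is the identity. *)
Definition SU2_rep (A B C D : 'M[R[i]]_2) : Prop :=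
  [/\ SU2 A, SU2 B, SU2 C, SU2 D & A *m B *m C *m D = 1%:M].

(* E_kappa: triples (tr rho(AB), tr rho(BC), tr rho(CA)) for representations with
   boundary traces kappa = (a,b,c,d).  (Traces of SU(2) matrices are real; we ask
   that the complex trace equal the real number embedded in R[i].) *)
Definition Ekappa (a b c d : R) (p : R * R * R) : Prop :=
  exists A B C D : 'M[R[i]]_2,
    [/\ SU2_rep A B C D,
        [/\ \tr A = a%:C, \tr B = b%:C, \tr C = c%:C & \tr D = d%:C] &
        [/\ \tr (A *m B) = p.1.1%:C, \tr (B *m C) = p.1.2%:C
          & \tr (C *m A) = p.2%:C]].

Definition Xlevel (a b c d x : R) (p : R * R * R) : Prop := Ekappa a b c d p /\ p.1.1 = x.
Definition Ylevel (a b c d y : R) (p : R * R * R) : Prop := Ekappa a b c d p /\ p.1.2 = y.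
Definition Zlevel (a b c d z : R) (p : R * R * R) : Prop := Ekappa a b c d p /\ p.2 = z.

(* A (possibly degenerate) ellipse in R^3 centered at c: the image of the unit
   circle under an affine map u |-> c + u1 e1 + u2 e2 (e1, e2 arbitrary, possibly
   dependent or zero, giving a segment or a point in the degenerate cases). *)
Definition ellipse_centered (S : R * R * R -> Prop) (c : R * R * R) : Prop :=
  exists e1 e2 : R * R * R, forall p : R * R * R,
    S p <-> exists u v : R, u ^+ 2 + v ^+ 2 = 1 /\
      p = (c.1.1 + u * e1.1.1 + v * e2.1.1,
           c.1.2 + u * e1.1.2 + v * e2.1.2,
           c.2 + u * e1.2 + v * e2.2).

End Defs.

(* Main.v *)
Require Import Defs.
From HB Require Import structures.
From mathcomp Require Import all_boot all_order all_algebra.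
From mathcomp Require Import complex.
From mathcomp Require Import reals.
From mathcomp Require Import ring lra.
Import Order.TTheory GRing.Theory Num.Theory.
Set Implicit Arguments. Unset Strict Implicit. Unset Printing Implicit Defensive.
Local Open Scope ring_scope.
Local Open Scope complex_scope.

Lemma det2 (T : comPzRingType) (M : 'M[T]_2) :
  \det M = M ord0 ord0 * M ord_max ord_max - M ord0 ord_max * M ord_max ord0.
Proof.
rewrite (expand_det_row _ ord0) !big_ord_recl big_ord0 /cofactor !det_mx11 !mxE /=.
have -> : lift ord0 (0 : 'I_1) = ord_max :> 'I_2 by apply/val_inj.
have -> : lift (ord_max : 'I_2) (0 : 'I_1) = ord0 :> 'I_2 by apply/val_inj.
rewrite /bump /= expr0 expr1; ring.
Qed.

Definition qm (R : realType) (p0 p1 p2 p3 : R) : 'M[R[i]]_2 :=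
  \matrix_(i < 2, j < 2)
    if (i : nat) == 0%N then (if (j : nat) == 0%N then p0 +i* p1 else p2 +i* p3)
    else (if (j : nat) == 0%N then (- p2) +i* p3 else p0 +i* (- p1)).

Lemma qm_mul (R : realType) (p0 p1 p2 p3 q0 q1 q2 q3 : R) :
  qm p0 p1 p2 p3 *m qm q0 q1 q2 q3 =
  qm (p0*q0 - p1*q1 - p2*q2 - p3*q3) (p0*q1 + p1*q0 + p2*q3 - p3*q2)
     (p0*q2 + p2*q0 + p3*q1 - p1*q3) (p0*q3 + p3*q0 + p1*q2 - p2*q1).
Proof.
apply/matrixP => i j; rewrite !mxE !big_ord_recl !big_ord0 !mxE /=.
case: i => [[|[|i]] Hi] //; case: j => [[|[|j]] Hj] //=; simpc; congr (_ +i* _); ring.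
Qed.

Lemma su2_qm (R : realType) (M : 'M[R[i]]_2) : SU2 M ->
  exists p0 p1 p2 p3 : R, M = qm p0 p1 p2 p3 /\ p0^+2 + p1^+2 + p2^+2 + p3^+2 = 1.
Proof.
case=> hU hD.
have e00 := congr1 (fun N : 'M[R[i]]_2 => N ord0 ord0) hU.
have e10 := congr1 (fun N : 'M[R[i]]_2 => N ord_max ord0) hU.
move: e00 e10 hD; rewrite /adjmx !mxE !big_ord_recl !big_ord0 !mxE /= det2.
have -> : lift ord0 ord0 = ord_max :> 'I_2 by apply/val_inj.
set p := M ord0 ord0; set q := M ord0 ord_max; set r := M ord_max ord0; set s := M ord_max ord_max.
rewrite !addr0 /= => e00 e10 hD.
have hs : s = p^*.
  apply/eqP; rewrite -subr_eq0; apply/eqP.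
  have -> : s - p^* = - (s * (p * p^* + q * q^* - 1) - p^* * (p * s - q * r - 1) - q * (r * p^* + s * q^*)) by ring.
  by rewrite e00 hD e10 !subrr; ring.
have hr : r = - q^*.
  apply/eqP; rewrite -subr_eq0; apply/eqP.
  have -> : r - - q^* = - r * (p * p^* + q * q^* - 1) - q^* * (p * s - q * r - 1) + p * (r * p^* + s * q^*) by ring.
  by rewrite e00 hD e10 !subrr; ring.
move: e00; case Ep: p => [p0 p1]; case Eq: q => [p2 p3] /= e00.
exists p0, p1, p2, p3; split.
  apply/matrixP => i j; rewrite !mxE.
  case: i => [[|[|i]] Hi] //; case: j => [[|[|j]] Hj] //=.
  - by rewrite -Ep /p; congr (M _ _); apply/val_inj.
  - by rewrite -Eq /q; congr (M _ _); apply/val_inj.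
  - have -> : Ordinal Hi = ord_max by apply/val_inj.
    have -> : Ordinal Hj = ord0 by apply/val_inj.
    by rewrite -/r hr Eq /=; simpc.
  - have -> : Ordinal Hi = ord_max by apply/val_inj.
    have -> : Ordinal Hj = ord_max by apply/val_inj.
    by rewrite -/s hs Ep.
move: e00; simpc; case=> h _; rewrite -h; ring.
Qed.

Record quat (R : Type) := Quat { q0 : R; q1 : R; q2 : R; q3 : R }.

Definition qmul (R : realType) (p q : quat R) : quat R :=
  Quat (q0 p * q0 q - q1 p * q1 q - q2 p * q2 q - q3 p * q3 q)
       (q0 p * q1 q + q1 p * q0 q + q2 p * q3 q - q3 p * q2 q)
       (q0 p * q2 q + q2 p * q0 q + q3 p * q1 q - q1 p * q3 q)
       (q0 p * q3 q + q3 p * q0 q + q1 p * q2 q - q2 p * q1 q).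
Definition qconj (R : realType) (p : quat R) : quat R :=
  Quat (q0 p) (- q1 p) (- q2 p) (- q3 p).
Definition qn (R : realType) (p : quat R) : R :=
  q0 p ^+ 2 + q1 p ^+ 2 + q2 p ^+ 2 + q3 p ^+ 2.
Definition qM (R : realType) (p : quat R) := qm (q0 p) (q1 p) (q2 p) (q3 p).

Lemma qM_mul (R : realType) (p q : quat R) : qM p *m qM q = qM (qmul p q).
Proof. by rewrite /qM qm_mul. Qed.

Lemma tr_qM (R : realType) (p : quat R) : \tr (qM p) = (2 * q0 p)%:C.
Proof.
rewrite /mxtrace !big_ord_recl big_ord0 !mxE /=; simpc; rewrite /real_complex_def.
congr (_ +i* _); ring.
Qed.

Lemma qM_inj (R : realType) (p q : quat R) : qM p = qM q -> p = q.
Proof.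
move=> h.
have e00 := congr1 (fun N : 'M[R[i]]_2 => N ord0 ord0) h.
have e01 := congr1 (fun N : 'M[R[i]]_2 => N ord0 ord_max) h.
move: e00 e01; rewrite !mxE /= => -[h0 h1] [h2 h3]; clear h.
by case: p q h0 h1 h2 h3 => [? ? ? ?] [? ? ? ?] /= -> -> -> ->.
Qed.

Lemma qM1 (R : realType) : 1%:M = qM (Quat 1 0 0 0 : quat R).
Proof.
apply/matrixP => i j; rewrite !mxE /=.
case: i => [[|[|i]] Hi] //; case: j => [[|[|j]] Hj] //=; simpc.
all: by apply/eqP; rewrite eq_complex /= ?oppr0 ?eqxx.
Qed.

Lemma su2_qM (R : realType) (M : 'M[R[i]]_2) : SU2 M ->
  exists p : quat R, M = qM p /\ qn p = 1.
Proof.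
by case/su2_qm => p0 [p1 [p2 [p3 [-> h]]]]; exists (Quat p0 p1 p2 p3).
Qed.

Lemma adj_qM (R : realType) (p : quat R) : adjmx (qM p) = qM (qconj p).
Proof.
apply/matrixP => i j; rewrite !mxE /=.
case: i => [[|[|i]] Hi] //; case: j => [[|[|j]] Hj] //=; simpc.
all: try by apply/eqP; rewrite eq_complex /= ?opprK ?oppr0 ?eqxx.
Qed.

Lemma qM_su2 (R : realType) (p : quat R) : qn p = 1 -> SU2 (qM p).
Proof.
move=> h; split.
  rewrite adj_qM qM_mul qM1; congr qM.
  case: p h => p0 p1 p2 p3; rewrite /qn /= => h.
  congr Quat; rewrite /= -?h; ring.
rewrite det2 !mxE /= -[1]/((1 : R)%:C) -h /qn; simpc; rewrite /real_complex_def.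
congr (_ +i* _); ring.
Qed.

Lemma qn_mul (R : realType) (p q : quat R) : qn (qmul p q) = qn p * qn q.
Proof. by case: p q => [? ? ? ?] [? ? ? ?]; rewrite /qn /=; ring. Qed.

Lemma qinv_uniq (R : realType) (q d : quat R) :
  qn d = 1 -> qmul q d = Quat 1 0 0 0 -> q = qconj d.
Proof.
case: q d => [x0 x1 x2 x3] [d0 d1 d2 d3]; rewrite /qn /qmul /qconj /= => hn.
case=> e0 e1 e2 e3.
have E : forall t : R, t = t * (d0 ^+ 2 + d1 ^+ 2 + d2 ^+ 2 + d3 ^+ 2) by move=> t; rewrite hn mulr1.
congr Quat.
- rewrite (E x0); transitivity ((x0 * d0 - x1 * d1 - x2 * d2 - x3 * d3) * d0 + (x0 * d1 + x1 * d0 + x2 * d3 - x3 * d2) * d1 + (x0 * d2 + x2 * d0 + x3 * d1 - x1 * d3) * d2 + (x0 * d3 + x3 * d0 + x1 * d2 - x2 * d1) * d3); first ring.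
  by rewrite e0 e1 e2 e3; ring.
- rewrite (E x1); transitivity (- (x0 * d0 - x1 * d1 - x2 * d2 - x3 * d3) * d1 + (x0 * d1 + x1 * d0 + x2 * d3 - x3 * d2) * d0 - (x0 * d2 + x2 * d0 + x3 * d1 - x1 * d3) * d3 + (x0 * d3 + x3 * d0 + x1 * d2 - x2 * d1) * d2); first ring.
  by rewrite e0 e1 e2 e3; ring.
- rewrite (E x2); transitivity (- (x0 * d0 - x1 * d1 - x2 * d2 - x3 * d3) * d2 + (x0 * d1 + x1 * d0 + x2 * d3 - x3 * d2) * d3 + (x0 * d2 + x2 * d0 + x3 * d1 - x1 * d3) * d0 - (x0 * d3 + x3 * d0 + x1 * d2 - x2 * d1) * d1); first ring.
  by rewrite e0 e1 e2 e3; ring.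
- rewrite (E x3); transitivity (- (x0 * d0 - x1 * d1 - x2 * d2 - x3 * d3) * d3 - (x0 * d1 + x1 * d0 + x2 * d3 - x3 * d2) * d2 + (x0 * d2 + x2 * d0 + x3 * d1 - x1 * d3) * d1 + (x0 * d3 + x3 * d0 + x1 * d2 - x2 * d1) * d0); first ring.
  by rewrite e0 e1 e2 e3; ring.
Qed.

Definition conic (R : realType) (a b x y z : R) :=
  x ^+ 2 + y ^+ 2 + z ^+ 2 + x * y * z = a * b * x - (a ^+ 2 + b ^+ 2 - 4).

Lemma rc_inj (R : realType) (x y : R) : x%:C = y%:C -> x = y.
Proof. by case. Qed.

Lemma alg_conic (R : realType) (a0 b0 g u w tp A2 B2 C2 : R) :
  A2 = 1 - a0 ^+ 2 -> B2 = 1 - b0 ^+ 2 -> C2 = 1 -> tp = - (a0 * w + b0 * u) ->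
  tp ^+ 2 = A2 * B2 * C2 + 2 * g * u * w - A2 * w ^+ 2 - B2 * u ^+ 2 - C2 * g ^+ 2 ->
  conic (2 * a0) (2 * b0) (2 * (a0 * b0 - g)) (-2 * w) (-2 * u).
Proof.
move=> -> -> -> -> /eqP; rewrite -subr_eq0 => /eqP h.
rewrite /conic; apply/eqP; rewrite -subr_eq0; apply/eqP.
rewrite -[RHS](mulr0 4) -h; ring.
Qed.

Lemma conic_of (R : realType) (a b x y z : R) (A B C : quat R) :
  qn A = 1 -> qn B = 1 -> qn C = 1 -> q0 C = 0 -> q0 (qmul (qmul A B) C) = 0 ->
  a = 2 * q0 A -> b = 2 * q0 B -> x = 2 * q0 (qmul A B) -> y = 2 * q0 (qmul B C) ->
  z = 2 * q0 (qmul C A) -> conic a b x y z.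
Proof.
case: A B C => [a0 a1 a2 a3] [b0 b1 b2 b3] [c0 c1 c2 c3]; rewrite /qn /= => hA hB hC hc0 hT.
subst c0 => -> -> hx hy hz.
have -> : x = 2 * (a0 * b0 - (a1 * b1 + a2 * b2 + a3 * b3)) by rewrite hx; ring.
have -> : y = -2 * (b1 * c1 + b2 * c2 + b3 * c3) by rewrite hy; ring.
have -> : z = -2 * (a1 * c1 + a2 * c2 + a3 * c3) by rewrite hz; ring.
apply: (@alg_conic _ _ _ _ _ _ ((a2 * b3 - a3 * b2) * c1 + (a3 * b1 - a1 * b3) * c2 + (a1 * b2 - a2 * b1) * c3)
   (a1 ^+ 2 + a2 ^+ 2 + a3 ^+ 2) (b1 ^+ 2 + b2 ^+ 2 + b3 ^+ 2) (c1 ^+ 2 + c2 ^+ 2 + c3 ^+ 2)).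
- by rewrite -hA; ring.
- by rewrite -hB; ring.
- by rewrite -hC; ring.
- apply/eqP; rewrite -subr_eq0; apply/eqP; rewrite -[RHS]oppr0 -hT; ring.
- ring.
Qed.

Lemma cs3 (R : realType) (b1 b2 b3 c1 c2 c3 : R) :
  (b1 * c1 + b2 * c2 + b3 * c3) ^+ 2 <= (b1 ^+ 2 + b2 ^+ 2 + b3 ^+ 2) * (c1 ^+ 2 + c2 ^+ 2 + c3 ^+ 2).
Proof.
rewrite -subr_ge0.
have -> : (b1 ^+ 2 + b2 ^+ 2 + b3 ^+ 2) * (c1 ^+ 2 + c2 ^+ 2 + c3 ^+ 2) - (b1 * c1 + b2 * c2 + b3 * c3) ^+ 2
  = (b2 * c3 - b3 * c2) ^+ 2 + (b3 * c1 - b1 * c3) ^+ 2 + (b1 * c2 - b2 * c1) ^+ 2 by ring.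
by rewrite !addr_ge0 ?sqr_ge0.
Qed.

Lemma bounds_of (R : realType) (a b x y z : R) (A B C : quat R) :
  qn A = 1 -> qn B = 1 -> qn C = 1 -> q0 C = 0 ->
  a = 2 * q0 A -> b = 2 * q0 B -> x = 2 * q0 (qmul A B) -> y = 2 * q0 (qmul B C) ->
  z = 2 * q0 (qmul C A) -> x ^+ 2 <= 4 /\ y ^+ 2 <= 4 - b ^+ 2 /\ z ^+ 2 <= 4 - a ^+ 2.
Proof.
move=> hA hB hC hc0 ha hb hx hy hz.
have hAB : qn (qmul A B) = 1 by rewrite qn_mul hA hB mulr1.
move: hAB hx; set P := qmul A B; case: P => p0 p1 p2 p3; rewrite /qn /= => hP ->.
split; first by nra.
move: hA hB hC hc0 ha hb hy hz; case: A B C => [a0 a1 a2 a3] [b0 b1 b2 b3] [c0 c1 c2 c3].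
rewrite /qn /= => hA hB hC hc0 -> -> -> ->; subst c0.
have h1 := cs3 b1 b2 b3 c1 c2 c3.
have h2 := cs3 a1 a2 a3 c1 c2 c3.
split; nra.
Qed.

Lemma forward (R : realType) (a b x y z : R) : Ekappa a b 0 0 (x, y, z) ->
  conic a b x y z /\ x ^+ 2 <= 4 /\ y ^+ 2 <= 4 - b ^+ 2 /\ z ^+ 2 <= 4 - a ^+ 2.
Proof.
case=> A [B [C [D [[sA sB sC sD hP] [tA tB tC tD] /= [tAB tBC tCA]]]]].
case: (su2_qM sA) => pa [EA na]; case: (su2_qM sB) => pb [EB nb].
case: (su2_qM sC) => pc [EC nc]; case: (su2_qM sD) => pd [ED nd].
subst A B C D.
move: hP; rewrite !qM_mul qM1 => /qM_inj hP.
have hQ := qinv_uniq nd hP.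
move: tA tB tC tD tAB tBC tCA; rewrite !qM_mul !tr_qM.
move=> /rc_inj ha /rc_inj hb /rc_inj hc /rc_inj hd /rc_inj hx /rc_inj hy /rc_inj hz.
have hc0 : q0 pc = 0 by move: hc => /eqP; rewrite mulf_eq0 /= pnatr_eq0 /= => /eqP.
have hd0 : q0 pd = 0 by move: hd => /eqP; rewrite mulf_eq0 /= pnatr_eq0 /= => /eqP.
have hT : q0 (qmul (qmul pa pb) pc) = 0 by rewrite hQ /= hd0.
split; first exact: (conic_of na nb nc hc0 hT).
exact: (bounds_of na nb nc hc0).
Qed.

Lemma qn_conj (R : realType) (p : quat R) : qn (qconj p) = qn p.
Proof. by case: p => ? ? ? ?; rewrite /qn /=; ring. Qed.

Lemma qmul_conj (R : realType) (p : quat R) : qmul p (qconj p) = Quat (qn p) 0 0 0.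
Proof. by case: p => ? ? ? ?; rewrite /qn /qmul /=; congr Quat; ring. Qed.

Lemma rep_of (R : realType) (a b x y z : R) (A B C : quat R) :
  qn A = 1 -> qn B = 1 -> qn C = 1 -> q0 C = 0 -> q0 (qmul (qmul A B) C) = 0 ->
  a = 2 * q0 A -> b = 2 * q0 B -> x = 2 * q0 (qmul A B) -> y = 2 * q0 (qmul B C) ->
  z = 2 * q0 (qmul C A) -> Ekappa a b 0 0 (x, y, z).
Proof.
move=> hA hB hC hc0 hT -> -> -> -> ->.
have hQ : qn (qmul (qmul A B) C) = 1 by rewrite !qn_mul hA hB hC !mulr1.
exists (qM A), (qM B), (qM C), (qM (qconj (qmul (qmul A B) C))); split.
- split; [exact: qM_su2 hA | exact: qM_su2 hB | exact: qM_su2 hC |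
    by apply: qM_su2; rewrite qn_conj |].
  by rewrite !qM_mul qmul_conj hQ qM1.
- split; rewrite !tr_qM //; [by rewrite hc0 mulr0 | by move: hT; rewrite /= => ->; rewrite mulr0].
- by split; rewrite qM_mul tr_qM.
Qed.

Lemma build (R : realType) (a b x y z : R) :
  conic a b x y z -> y ^+ 2 <= 4 - b ^+ 2 -> z ^+ 2 <= 4 - a ^+ 2 -> Ekappa a b 0 0 (x, y, z).
Proof.
move=> hc hy hz.
pose rA2 := 1 - a ^+ 2 / 4 - z ^+ 2 / 4. pose rB2 := 1 - b ^+ 2 / 4 - y ^+ 2 / 4.
pose gm := a * b / 4 - x / 2 - y * z / 4. pose dl := (a * y + b * z) / 4.
have hA2 : 0 <= rA2 by rewrite /rA2; lra.
have hB2 : 0 <= rB2 by rewrite /rB2; lra.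
have key : gm ^+ 2 + dl ^+ 2 = rA2 * rB2.
  move: hc; rewrite /conic /gm /dl /rA2 /rB2 => /eqP; rewrite -subr_eq0 => /eqP hc.
  apply/eqP; rewrite -subr_eq0; apply/eqP.
  rewrite -[RHS](mulr0 (1/4)) -hc; by field.
pose rA := Num.sqrt rA2.
have rAsq : rA ^+ 2 = rA2 by rewrite sqr_sqrtr.
pose rB := Num.sqrt rB2.
have rBsq : rB ^+ 2 = rB2 by rewrite sqr_sqrtr.
have [rA0 | rAn0] := eqVneq rA 0.
- have hrA2 : rA2 = 0 by rewrite -rAsq rA0 expr0n.
  have h0 : gm ^+ 2 + dl ^+ 2 == 0 by rewrite key hrA2 mul0r.
  move: h0; rewrite paddr_eq0 ?sqr_ge0 // !sqrf_eq0 => /andP[/eqP gm0 /eqP dl0].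
  apply: (@rep_of _ _ _ _ _ _ (Quat (a/2) 0 0 (-z/2)) (Quat (b/2) rB 0 (-y/2)) (Quat 0 0 0 1)); rewrite /qn /=.
  + move: hrA2; rewrite /rA2; nra.
  + move: rBsq; rewrite /rB2; nra.
  + nra.
  + by [].
  + move: dl0; rewrite /dl; nra.
  + by field.
  + by field.
  + move: gm0; rewrite /gm; nra.
  + by field.
  + by field.
- apply: (@rep_of _ _ _ _ _ _ (Quat (a/2) rA 0 (-z/2)) (Quat (b/2) (gm / rA) (dl / rA) (-y/2)) (Quat 0 0 0 1)); rewrite /qn /=.
  + move: rAsq; rewrite /rA2; nra.
  + have e : (gm / rA) ^+ 2 + (dl / rA) ^+ 2 = rB2.
      have -> : (gm / rA) ^+ 2 + (dl / rA) ^+ 2 = (gm ^+ 2 + dl ^+ 2) / rA ^+ 2.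
        by field; rewrite ?rAn0.
      by rewrite key -rAsq; field; rewrite ?rAn0.
    move: e; rewrite /rB2; nra.
  + nra.
  + by [].
  + by rewrite /dl; field.
  + by field.
  + by field.
  + by rewrite /gm; field.
  + by field.
  + by field.
Qed.

Lemma conic_boundz (R : realType) (a b x y z : R) :
  conic a b x y z -> x ^+ 2 < 4 -> z ^+ 2 <= 4 - a ^+ 2.
Proof.
rewrite /conic => hc hx.
have h1 : (4 - x ^+ 2) * z ^+ 2 + (2 * y + x * z) ^+ 2 + (a * x - 2 * b) ^+ 2 = (4 - x ^+ 2) * (4 - a ^+ 2).
  apply/eqP; rewrite -subr_eq0; apply/eqP.
  transitivity (4 * (x ^+ 2 + y ^+ 2 + z ^+ 2 + x * y * z - (a * b * x - (a ^+ 2 + b ^+ 2 - 4)))); first ring.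
  by rewrite hc subrr mulr0.
have h2 : (4 - x ^+ 2) * z ^+ 2 <= (4 - x ^+ 2) * (4 - a ^+ 2).
  have := sqr_ge0 (2 * y + x * z); have := sqr_ge0 (a * x - 2 * b); lra.
by rewrite -(ler_pM2l (_ : 0 < 4 - x ^+ 2)) // subr_gt0.
Qed.

Lemma conic_sym (R : realType) (a b x y z : R) : conic a b x y z -> conic b a x z y.
Proof.
rewrite /conic => h.
have -> : b * a * x - (b ^+ 2 + a ^+ 2 - 4) = a * b * x - (a ^+ 2 + b ^+ 2 - 4) by ring.
by rewrite -h; ring.
Qed.

Lemma conic_boundy (R : realType) (a b x y z : R) :
  conic a b x y z -> x ^+ 2 < 4 -> y ^+ 2 <= 4 - b ^+ 2.
Proof. by move=> /conic_sym h hx; exact: (conic_boundz h hx). Qed.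

Lemma K_ge0 (R : realType) (a b x y z : R) :
  conic a b x y z -> x ^+ 2 <= 4 -> 0 <= a * b * x - (a ^+ 2 + b ^+ 2 - 4) - x ^+ 2.
Proof.
rewrite /conic => hc hx.
have hx1 : 0 <= 2 + x by nra.
have hx2 : 0 <= 2 - x by nra.
have e : 4 * (a * b * x - (a ^+ 2 + b ^+ 2 - 4) - x ^+ 2) = (2 + x) * (y + z) ^+ 2 + (2 - x) * (y - z) ^+ 2.
  by rewrite -hc; ring.
have : 0 <= 4 * (a * b * x - (a ^+ 2 + b ^+ 2 - 4) - x ^+ 2).
  by rewrite e addr_ge0 // mulr_ge0 // sqr_ge0.
by rewrite pmulr_rge0.
Qed.

Lemma K_lea (R : realType) (a b x : R) :
  a ^+ 2 <= 4 -> x ^+ 2 <= 4 -> a * b * x - (a ^+ 2 + b ^+ 2 - 4) - x ^+ 2 <= 4 - a ^+ 2.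
Proof.
move=> ha hx.
have e : 4 * (a * b * x - (a ^+ 2 + b ^+ 2 - 4) - x ^+ 2) = (4 - a ^+ 2) * (4 - x ^+ 2) - (a * x - 2 * b) ^+ 2 by ring.
have h1 : 0 <= (4 - a ^+ 2) * x ^+ 2 by rewrite mulr_ge0 ?sqr_ge0 // subr_ge0.
have h2 := sqr_ge0 (a * x - 2 * b).
nra.
Qed.

Lemma ell_generic (R : realType) (a b x : R) : x ^+ 2 < 4 ->
  (exists p, Xlevel a b 0 0 x p) -> ellipse_centered (Xlevel a b 0 0 x) (x, 0, 0).
Proof.
move=> hx [[[x' y0] z0] [hE /= hx']]; subst x'.
case: (forward hE) => hc0 _.
pose K := a * b * x - (a ^+ 2 + b ^+ 2 - 4) - x ^+ 2.
have K0 : 0 <= K := K_ge0 hc0 (ltW hx).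
have hp : 0 < 2 + x by nra.
have hm : 0 < 2 - x by nra.
pose s := Num.sqrt (K / (2 + x)). pose t := Num.sqrt (K / (2 - x)).
have hs2 : s ^+ 2 = K / (2 + x) by rewrite sqr_sqrtr // divr_ge0 // ltW.
have ht2 : t ^+ 2 = K / (2 - x) by rewrite sqr_sqrtr // divr_ge0 // ltW.
have hs : s ^+ 2 * (2 + x) = K by rewrite hs2; field; rewrite gt_eqF.
have ht : t ^+ 2 * (2 - x) = K by rewrite ht2; field; rewrite gt_eqF.
exists (0, s, s), (0, t, - t) => -[[x' y] z] /=; split.
- case=> hE' /= hx'; subst x'. case: (forward hE') => hc _.
  have e : (2 + x) * (y + z) ^+ 2 + (2 - x) * (y - z) ^+ 2 = 4 * K.
    by move: hc; rewrite /conic /K => hc; rewrite -hc; ring.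
  have [K00 | Kn0] := eqVneq K 0.
  + have n1 : 0 <= (2 + x) * (y + z) ^+ 2 by rewrite mulr_ge0 // ?sqr_ge0 // ltW.
    have n2 : 0 <= (2 - x) * (y - z) ^+ 2 by rewrite mulr_ge0 // ?sqr_ge0 // ltW.
    have e1 : (2 + x) * (y + z) ^+ 2 = 0 by rewrite K00 in e; lra.
    have e2 : (2 - x) * (y - z) ^+ 2 = 0 by rewrite K00 in e; lra.
    move/eqP: e1; rewrite mulf_eq0 (gt_eqF hp) /= sqrf_eq0 => /eqP h1.
    move/eqP: e2; rewrite mulf_eq0 (gt_eqF hm) /= sqrf_eq0 => /eqP h2.
    have -> : y = 0 by lra.
    have -> : z = 0 by lra.
    have s0 : s = 0 by rewrite /s K00 mul0r sqrtr0.
    exists 1, 0; split; first by rewrite expr1n expr0n addr0.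
    by rewrite s0 !mul0r !mulr0 !addr0.
  + have Kp : 0 < K by rewrite lt_neqAle eq_sym Kn0 K0.
    have sp : 0 < s by rewrite sqrtr_gt0 divr_gt0.
    have tp : 0 < t by rewrite sqrtr_gt0 divr_gt0.
    exists ((y + z) / (2 * s)), ((y - z) / (2 * t)); split.
    * rewrite !expr_div_n !exprMn hs2 ht2.
      transitivity (((2 + x) * (y + z) ^+ 2 + (2 - x) * (y - z) ^+ 2) / (4 * K)).
        by field; rewrite ?(gt_eqF hp) ?(gt_eqF hm) ?(gt_eqF Kp).
      by rewrite e; field; rewrite ?(gt_eqF Kp).
    * congr (_, _, _).
      - by ring.
      - by field; rewrite ?(gt_eqF sp) ?(gt_eqF tp).
      - by field; rewrite ?(gt_eqF sp) ?(gt_eqF tp).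
- case=> u [v [huv ->]].
  have hc : conic a b x (0 + u * s + v * t) (0 + u * s + v * - t).
    rewrite /conic.
    transitivity (x ^+ 2 + u ^+ 2 * (s ^+ 2 * (2 + x)) + v ^+ 2 * (t ^+ 2 * (2 - x))); first ring.
    rewrite hs ht; transitivity (x ^+ 2 + (u ^+ 2 + v ^+ 2) * K); first ring.
    by rewrite huv /K; ring.
  rewrite /Xlevel /= (_ : x + u * 0 + v * 0 = x); last by ring.
  split=> //; exact: (build hc (conic_boundy hc hx) (conic_boundz hc hx)).
Qed.

Lemma ell_degen (R : realType) (a b x : R) : b ^+ 2 <= 4 -> x ^+ 2 = 4 ->
  (exists p, Xlevel a b 0 0 x p) -> ellipse_centered (Xlevel a b 0 0 x) (x, 0, 0).
Proof.
move=> hb hx [[[x' y0] z0] [hE /= hx']]; subst x'.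
case: (forward hE) => hc0 _.
pose sg := x / 2.
have sg2 : sg ^+ 2 = 1 by rewrite /sg expr_div_n hx; field.
have hxs : x = 2 * sg by rewrite /sg; field.
have sq : forall y z, conic a b x y z -> (y + sg * z) ^+ 2 + (a - sg * b) ^+ 2 = 0.
  move=> y z; rewrite /conic hxs => hc.
  transitivity (((2 * sg) ^+ 2 + y ^+ 2 + z ^+ 2 + 2 * sg * y * z - (a * b * (2 * sg) - (a ^+ 2 + b ^+ 2 - 4)))
     + (sg ^+ 2 - 1) * (z ^+ 2 + b ^+ 2 - 4)); first ring.
  by rewrite hc sg2 !subrr mul0r addr0.
have [_ hab] : y0 + sg * z0 = 0 /\ a - sg * b = 0.
  have := sq _ _ hc0; move/eqP; rewrite paddr_eq0 ?sqr_ge0 // !sqrf_eq0 => /andP[/eqP -> /eqP ->] //.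
have ha : a = sg * b by apply/eqP; rewrite -subr_eq0 hab.
pose r := Num.sqrt (4 - b ^+ 2).
have r2 : r ^+ 2 = 4 - b ^+ 2 by rewrite sqr_sqrtr // subr_ge0.
have r0 : 0 <= r by rewrite sqrtr_ge0.
exists (0, r, - (sg * r)), (0, 0, 0) => -[[x' y] z] /=; split.
- case=> hE' /= hx'; subst x'. case: (forward hE') => hc [_ [hy _]].
  have hyz : y + sg * z = 0.
    have := sq _ _ hc; move/eqP; rewrite paddr_eq0 ?sqr_ge0 // !sqrf_eq0 => /andP[/eqP -> _] //.
  have hz : z = - (sg * y).
    have e : - (sg * y) = - (sg * (y + sg * z)) + sg ^+ 2 * z by ring.
    by rewrite e hyz sg2 mulr0 oppr0 add0r mul1r.
  have [r00 | rn0] := eqVneq r 0.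
  + have y0' : y = 0.
      by apply/eqP; rewrite -sqrf_eq0 eq_le sqr_ge0 andbT (le_trans hy) // -r2 r00 expr0n.
    exists 1, 0; split; first by rewrite expr1n expr0n addr0.
    by rewrite hz y0' r00; congr (_, _, _); ring.
  + have rp : 0 < r by rewrite lt_neqAle eq_sym rn0 r0.
    pose u := y / r.
    have u2 : u ^+ 2 <= 1.
      by rewrite /u expr_div_n ler_pdivrMr ?exprn_gt0 // mul1r r2.
    exists u, (Num.sqrt (1 - u ^+ 2)); split.
      by rewrite sqr_sqrtr ?subr_ge0 // addrC subrK.
    congr (_, _, _).
    * by ring.
    * by rewrite /u; field; rewrite gt_eqF.
    * by rewrite hz /u; field; rewrite gt_eqF.
- case=> u [v [huv ->]].
  have u2 : u ^+ 2 <= 1 by have := sqr_ge0 v; lra.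
  have ur : u ^+ 2 * r ^+ 2 <= r ^+ 2 by rewrite ler_piMl ?sqr_ge0.
  have hc : conic a b x (0 + u * r + v * 0) (0 + u * - (sg * r) + v * 0).
    rewrite /conic ha hxs; apply/eqP; rewrite -subr_eq0; apply/eqP.
    transitivity ((sg ^+ 2 - 1) * (4 - u ^+ 2 * r ^+ 2 - b ^+ 2)); first ring.
    by rewrite sg2 subrr mul0r.
  rewrite /Xlevel /= (_ : x + u * 0 + v * 0 = x); last by ring.
  split=> //; apply: (build hc).
  + have -> : (0 + u * r + v * 0) ^+ 2 = u ^+ 2 * r ^+ 2 by ring.
    by rewrite -r2.
  + have -> : (0 + u * - (sg * r) + v * 0) ^+ 2 = sg ^+ 2 * (u ^+ 2 * r ^+ 2) by ring.
    by rewrite sg2 mul1r ha exprMn sg2 mul1r -r2.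
Qed.

Unset Implicit Arguments.
Local Close Scope complex_scope.

Theorem lemma6p3 (R : realType) (a b : R) (ha : -2 <= a <= 2) (hb : -2 <= b <= 2) :
  (forall x : R, (exists p, Xlevel a b 0 0 x p) ->
     ellipse_centered (Xlevel a b 0 0 x) (x, 0, 0))
  /\
  (forall x : R, (exists p, Xlevel a b 0 0 x p) ->
     (exists p, Xlevel a b 0 0 x p /\ Ylevel a b 0 0 0 p) /\
     (exists p, Xlevel a b 0 0 x p /\ Zlevel a b 0 0 0 p)).
Proof.
have a2 : a ^+ 2 <= 4 by case/andP: ha => h1 h2; nra.
have b2 : b ^+ 2 <= 4 by case/andP: hb => h1 h2; nra.
split.
- move=> x hex.
  have hx4 : x ^+ 2 <= 4.
    by case: hex => -[[x' y0] z0] [hE /= <-]; case: (forward hE) => _ [].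
  case: (ltP (x ^+ 2) 4) => h.
  + exact: ell_generic h hex.
  + by apply: ell_degen b2 _ hex; apply/eqP; rewrite eq_le hx4 h.
- move=> x [[[x' y0] z0] [hE /= hx']]; subst x'.
  case: (forward hE) => hc [hx4 _].
  pose K := a * b * x - (a ^+ 2 + b ^+ 2 - 4) - x ^+ 2.
  have K0 : 0 <= K := K_ge0 hc hx4.
  have Ka : K <= 4 - a ^+ 2 := K_lea b a2 hx4.
  have Kb : K <= 4 - b ^+ 2.
    have -> : K = b * a * x - (b ^+ 2 + a ^+ 2 - 4) - x ^+ 2 by rewrite /K; ring.
    exact: K_lea.
  have sK : Num.sqrt K ^+ 2 = K by rewrite sqr_sqrtr.
  split.
  + have hc' : conic a b x 0 (Num.sqrt K) by rewrite /conic sK /K; ring.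
    have hE' : Ekappa a b 0 0 (x, 0, Num.sqrt K).
      by apply: build hc' _ _; rewrite ?sK //; nra.
    by exists (x, 0, Num.sqrt K).
  + have hc' : conic a b x (Num.sqrt K) 0 by rewrite /conic sK /K; ring.
    have hE' : Ekappa a b 0 0 (x, Num.sqrt K, 0).
      by apply: build hc' _ _; rewrite ?sK //; nra.
    by exists (x, Num.sqrt K, 0).
Qed.
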